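(* For all integers $k \geq 2$ and $n \geq 2k+3$, \[\iota(B_{n,C(k)}, \{K_{1,k}\}) = \left\lfloor \frac{2n}{2k+3} \right\rfloor.\]
   Context: Graphs are finite and simple. For $D \subseteq V(G)$, $N[D]$ is the union of closed neighbourhoods of vertices of $D$; $D$ is $\{K_{1,k}\}$-isolating if $G - N[D]$ contains no copy of the star $K_{1,k}$ (equivalently has maximum degree less than $k$), and $\iota(G,\{K_{1,k}\})$ is the minimum size of such a set. Define $\mathrm{mod}^*$ as the usual modulo operation except that $ba \ \mathrm{mod}^*\ a = a$ (instead of $0$). For $2 \le r < m$ (and similarly for $r \geq 1$), $C_m^r$ is the graph on $[m]$ with edges $\{i, (i+j) \ \mathrm{mod}^*\ m\}$ for $i \in [m]$, $j \in [r]$. For $k \geq 2$: if $k$ is even, $C(k) = C_{2k+2}^{k/2}$; if $k$ is odd, $C(k)$ has vertex set $[2k+2]$ and edge set $E(C_{2k+2}^{(k-1)/2}) \cup \{\{i, i+\frac{k+1}{2}\} : i \in [\frac{k+1}{2}] \cup ([k+1+\frac{k+1}{2}] \setminus [k+1])\}$. For $n \geq 2k+3$, $B_{n,C(k)}$ is defined as follows. Let $q = \lfloor n/(2k+3) \rfloor$ and $n = q(2k+3)+r$ with $0 \le r \le 2k+2$. Let $u_1,\dots,u_{q+r}$ be new vertices. Let $R$ be the empty graph if $r \le 1$, and if $r \ge 2$ let $R$ be the graph with vertex set $\{u_{q+j} : j \in [r]\}$ and edge set $\{u_{q+r}u_{q+j} : j \in [r-1]\}$. Let $G_1,\dots,G_q$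 be pairwise disjoint copies of $C(k)$ (disjoint from the $u$'s), with $v_{i,1},\dots,v_{i,2k+2}$ the vertices of $G_i$ corresponding to $1,\dots,2k+2$. Let $t = \min\{1,r\}$. Then $B_{n,C(k)}$ has vertex set $\{u_1,\dots,u_{q+r}\} \cup \bigcup_{i=1}^q V(G_i)$ and edge set $\{u_iv_{i,1} : i \in [q]\} \cup \{u_iu_{i+1} : i \in [q+t-1]\} \cup E(R) \cup \bigcup_{i=1}^q E(G_i)$. *)

(* Defs.v *)
From mathcomp Require Import all_boot.
Set Implicit Arguments. Unset Strict Implicit. Unset Printing Implicit Defensive.

Definition closed_nbhd (T : finType) (adj : rel T) (D : {set T}) : {set T} :=
  [set v | (v \in D) || [exists d in D, adj d v]].

Definition has_star_outside (T : finType) (adj : rel T) (k : nat) (X : {set T}) : bool :=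
  [exists v : T, exists S : {set T},
     [&& v \notin X, v \notin S, #|S| == k,
         [disjoint S & X] & [forall w in S, adj v w]]].

Definition isolating (T : finType) (adj : rel T) (k : nat) (D : {set T}) : bool :=
  ~~ has_star_outside adj k (closed_nbhd adj D).

(* iota(G, {K_{1,k}}) : minimum size of an isolating set (V itself is isolating) *)
Definition iota_star (T : finType) (adj : rel T) (k : nat) : nat :=
  \big[minn/#|T|]_(D : {set T} | isolating adj k D) #|D|.

Definition modstar (a m : nat) : nat := if a %% m == 0 then m else a %% m.

Definition Cpow_adj (m r x y : nat) : bool :=
  has (fun i => has (fun j =>
     ((x == i) && (y == modstar (i + j) m)) ||
     ((y == i) && (x == modstar (i + j) m))) (iota 1 r)) (iota 1 m).

Definition Cextra_edge (k i j : nat) : bool :=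
  let h := (k.+1)./2 in
  [&& ((1 <= i <= h) || (k + 2 <= i <= k + 1 + h)) & j == i + h].

Definition Ck_adj (k x y : nat) : bool :=
  if odd k then
    Cpow_adj (2 * k + 2) ((k - 1)./2) x y || Cextra_edge k x y || Cextra_edge k y x
  else Cpow_adj (2 * k + 2) (k./2) x y.

Definition Bq (n k : nat) : nat := n %/ (2 * k + 3).
Definition Br (n k : nat) : nat := n %% (2 * k + 3).

(* inl a  stands for u_{a+1};  inr (i, x) stands for v_{i+1, x+1} *)
Definition Bvert (n k : nat) : finType :=
  ('I_(Bq n k + Br n k) + ('I_(Bq n k) * 'I_(2 * k + 2)))%type.

(* edges among the u's, on 1-based labels a b:
   u_i u_{i+1} for i in [q+t-1], and E(R) = u_{q+r} u_{q+j}, j in [r-1] if r >= 2 *)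
Definition u_edge (q r a b : nat) : bool :=
  let t := minn 1 r in
  [&& 1 <= a, a <= q + t - 1 & b == a.+1] ||
  [&& 2 <= r, a == q + r & (q + 1 <= b <= q + r - 1)].

Definition Badj (n k : nat) : rel (Bvert n k) :=
  fun x y =>
    match x, y with
    | inl a, inl b => u_edge (Bq n k) (Br n k) a.+1 b.+1 || u_edge (Bq n k) (Br n k) b.+1 a.+1
    | inl a, inr (i, v) => (nat_of_ord a == nat_of_ord i) && (nat_of_ord v == 0)
    | inr (i, v), inl a => (nat_of_ord a == nat_of_ord i) && (nat_of_ord v == 0)
    | inr (i, v), inr (j, w) => (i == j) && Ck_adj k v.+1 w.+1
    end.

(* Main.v *)
Require Import Defs.
From mathcomp Require Import all_boot.
From mathcomp Require Import zify.

Lemma modstarE s m : 1 <= s -> s < m + m -> modstar s m = if s <= m then s else s - m.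
Proof.
move=> s1 s2; rewrite /modstar.
case: (ltngtP s m) => H.
- rewrite modn_small //. by have -> : (s == 0) = false by lia.
- have -> : s = (s - m) + m by lia.
  rewrite modnDr modn_small; last by lia.
  have -> : (s - m == 0) = false by lia. by rewrite addnK.
- by rewrite H modnn eqxx.
Qed.

Definition cform m r a b :=
  [|| (a < b) && (b <= a + r), (b < a) && (a <= b + r), (a + m <= b + r) | (b + m <= a + r)].

Lemma cpowE m r a b : r < m -> a < m -> b < m -> Cpow_adj m r a.+1 b.+1 = cform m r a b.
Proof.
move=> rm am bm; rewrite /Cpow_adj /cform.
apply/idP/idP.
- case/hasP => i; rewrite mem_iota => /andP[i1 i2].
  case/hasP => j; rewrite mem_iota => /andP[j1 j2].
  rewrite modstarE; [|lia|lia].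
  case: ifP => H; lia.
- move=> H.
  have [aleb|blta] := leqP a b.
  + have [H1|H1] := leqP (b) (a + r).
    * apply/hasP; exists a.+1; first by rewrite mem_iota; lia.
      apply/hasP; exists (b - a); first by rewrite mem_iota; lia.
      rewrite modstarE; [|lia|lia]. case: ifP => H2; lia.
    * apply/hasP; exists b.+1; first by rewrite mem_iota; lia.
      apply/hasP; exists (a + m - b); first by rewrite mem_iota; lia.
      rewrite modstarE; [|lia|lia]. case: ifP => H2; lia.
  + have [H1|H1] := leqP (a) (b + r).
    * apply/hasP; exists b.+1; first by rewrite mem_iota; lia.
      apply/hasP; exists (a - b); first by rewrite mem_iota; lia.
      rewrite modstarE; [|lia|lia]. case: ifP => H2; lia.
    * apply/hasP; exists a.+1; first by rewrite mem_iota; lia.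
      apply/hasP; exists (b + m - a); first by rewrite mem_iota; lia.
      rewrite modstarE; [|lia|lia]. case: ifP => H2; lia.
Qed.

Definition CA k a b := Ck_adj k a.+1 b.+1.

Definition ext H a b := ((a <= H) || (2*H+2 <= a <= 3*H+2)) && (b == a + H + 1).

Lemma CkE_even H a b : 1 <= H -> a < 2*(2*H)+2 -> b < 2*(2*H)+2 ->
  CA (2*H) a b = cform (2*(2*H)+2) H a b.
Proof.
move=> H1 am bm; rewrite /CA /Ck_adj oddM /=.
have -> : (2 * H)./2 = H by rewrite mul2n half_double.
by rewrite cpowE //; lia.
Qed.

Lemma CkE_odd H a b : 1 <= H -> a < 2*(2*H+1)+2 -> b < 2*(2*H+1)+2 ->
  CA (2*H+1) a b = [|| cform (2*(2*H+1)+2) H a b, ext H a b | ext H b a].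
Proof.
move=> H1 am bm; rewrite /CA /Ck_adj addn1 /= oddM /=.
have -> : ((2 * H).+1 - 1)./2 = H by rewrite subn1 /= mul2n half_double.
rewrite cpowE; [|lia|lia|lia].
rewrite /Cextra_edge.
have -> : (2 * H).+2./2 = H.+1 by rewrite /= mul2n half_double.
rewrite /ext -!orbA; congr (_ || _).
congr (_ || _); apply/idP/idP; lia.
Qed.

Lemma parity k : 2 <= k -> (exists2 H, 1 <= H & k = 2*H) \/ (exists2 H, 1 <= H & k = 2*H+1).
Proof.
move=> k2; case: (boolP (odd k)) => ok.
- right; exists k./2; last by rewrite -[LHS]odd_double_half ok mul2n; lia.
  rewrite -[k]odd_double_half ok in k2; lia.
- left; exists k./2; last by rewrite -[LHS]odd_double_half (negbTE ok) mul2n; lia.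
  rewrite -[k]odd_double_half (negbTE ok) in k2; lia.
Qed.

Lemma half2 H : (2*H)./2 = H. Proof. by rewrite mul2n half_double. Qed.
Lemma half2S H : (2*H+1)./2 = H. Proof. by rewrite addn1 /= mul2n uphalf_double. Qed.
Lemma odd2 H : odd (2*H) = false. Proof. by rewrite oddM. Qed.
Lemma odd2S H : odd (2*H+1) = true. Proof. by rewrite addn1 /= oddM. Qed.

Definition addm m y d := if y + d < m then y + d else y + d - m.
Definition pofs k y := let H := k./2 in
  if (y <= H) || (2*H+2 <= y <= 3*H+2) then H+1 else 3*H+3.
Definition offs k y := iota 1 (k./2) ++ (if odd k then [:: pofs k y] else [::])
   ++ iota (2*k+2 - k./2) (k./2).
Definition nb k y := map (addm (2*k+2) y) (offs k y).
Definition anti k a := addm (2*k+2) a (k+1).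
Definition cmpl k := iota 1 (k./2 + odd k) ++ iota (3 * k./2 + 2 + 2 * odd k) (k./2).

Ltac splitifs := rewrite /addm /pofs /=; repeat (case: ifP => ? /=).

Lemma L_anti {k a} : 2 <= k -> a < 2*k+2 ->
  [/\ anti k a < 2*k+2, anti k a != a & ~~ CA k a (anti k a)].
Proof.
move=> k2 am.
have ab : anti k a < 2*k+2 by rewrite /anti /addm; case: ifP => ?; lia.
split => //; first by rewrite /anti /addm; case: ifP => ?; lia.
case: (parity k k2) => [[H H1 kE]|[H H1 kE]]; subst k.
- rewrite CkE_even //.
  move: ab; rewrite /anti /cform; splitifs; lia.
- rewrite CkE_odd //.
  move: ab; rewrite /anti /cform /ext; splitifs; lia.
Qed.

Lemma addm_cases m y d : (y + d < m /\ addm m y d = y + d) \/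
  (exists z, y + d = z + m /\ addm m y d = z).
Proof.
rewrite /addm; case: ltnP => h; [by left|right].
exists (y + d - m); split => //; lia.
Qed.

Lemma pofs_cases H y :
  (((y <= H) || (2*H+2 <= y <= 3*H+2)) /\ pofs (2*H+1) y = H + 1) \/
  (~~ ((y <= H) || (2*H+2 <= y <= 3*H+2)) /\ pofs (2*H+1) y = 3 * H + 3).
Proof. rewrite /pofs half2S; case: ifP => h; [left|right]; split => //; by rewrite h. Qed.

Ltac asplit := match goal with |- context[addm ?m ?y ?d] =>
   lazymatch y with context[addm _ _ _] => fail | _ => idtac end;
   case: (addm_cases m y d) => [[? ->]|[? [? ->]]] end.

Ltac psplit := match goal with |- context[pofs (2 * ?H + 1) ?y] =>
   case: (pofs_cases H y) => [[? ->]|[? ->]] end.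

Lemma L_nb k a w : 2 <= k -> a < 2*k+2 -> w \in nb k (anti k a) ->
  [/\ w < 2*k+2, CA k (anti k a) w, w != a, ~~ CA k a w & w != anti k a].
Proof.
move=> k2 am /mapP [d dIn ->].
move: dIn.
case: (parity k k2) => [[H H1 kE]|[H H1 kE]]; subst k.
- rewrite /offs half2 odd2 /= mem_cat !mem_iota.
  have -> : 2 * (2 * H) + 2 - H = 3*H+2 by lia.
  move=> dIn.
  have ab : anti (2 * H) a < 2 * (2 * H) + 2.
    by rewrite /anti; repeat asplit; lia.
  have wm : addm (2 * (2 * H) + 2) (anti (2 * H) a) d < 2 * (2 * H) + 2.
    by move: ab; rewrite /anti; repeat asplit; move=> ?; case/orP: dIn => /andP [? ?]; lia.
  rewrite !CkE_even //.
  move: wm ab; rewrite /anti /cform; repeat asplit; move=> ? ?;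
  case/orP: dIn => /andP [? ?]; split; lia.
- rewrite /offs half2S odd2S /= mem_cat in_cons !mem_iota.
  have -> : 2 * (2 * H + 1) + 2 - H = 3*H+4 by lia.
  move=> dIn.
  have ab : anti (2 * H + 1) a < 2 * (2 * H + 1) + 2.
    by rewrite /anti; repeat asplit; lia.
  have wm : addm (2 * (2 * H + 1) + 2) (anti (2 * H + 1) a) d < 2 * (2 * H + 1) + 2.
    move: ab dIn; rewrite /anti; repeat asplit; psplit; move=> ? dIn;
    case/orP: dIn => [/andP [? ?]|/orP [/eqP ?|/andP [? ?]]]; lia.
  rewrite !CkE_odd //.
  move: wm ab dIn; rewrite /anti /cform /ext; repeat asplit; psplit; move=> ? ? dIn;
  case/orP: dIn => [/andP [? ?]|/orP [/eqP ?|/andP [? ?]]]; split; lia.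
Qed.
Lemma offs_bound k y d : 2 <= k -> d \in offs k y -> 0 < d < 2*k+2.
Proof.
move=> k2; case: (parity k k2) => [[H H1 kE]|[H H1 kE]]; subst k.
- rewrite /offs half2 odd2 /= !mem_cat !mem_iota; lia.
- rewrite /offs half2S odd2S /= !mem_cat in_cons !mem_iota; psplit.
  + case/orP => [/andP [? ?]|/orP [/eqP ?|/andP [? ?]]]; lia.
  + case/orP => [/andP [? ?]|/orP [/eqP ?|/andP [? ?]]]; lia.
Qed.

Lemma L_nbU k y : 2 <= k -> uniq (nb k y) /\ size (nb k y) = k.
Proof.
move=> k2; split; last first.
  rewrite /nb size_map /offs !size_cat !size_iota.
  case: (odd k) (odd_double_half k) => /=; rewrite -mul2n; lia.
rewrite /nb map_inj_in_uniq.
- rewrite /offs !cat_uniq !iota_uniq /= andbT.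
  case: (parity k k2) => [[H H1 kE]|[H H1 kE]]; subst k.
  + rewrite half2 odd2 /=; apply/andP; split; apply/hasPn => x; rewrite !mem_iota ?in_nil //; lia.
  + rewrite half2S odd2S /=; apply/andP; split.
    * rewrite negb_or mem_iota; apply/andP; split; first by psplit; lia.
      apply/hasPn => x; rewrite !mem_iota; lia.
    * apply/hasPn => x; rewrite mem_iota inE; psplit; lia.
- move=> d1 d2 /(offs_bound _ _ _ k2) /andP [? ?] /(offs_bound _ _ _ k2) /andP [? ?].
  repeat asplit; lia.
Qed.

Lemma L_cmpl k b : 2 <= k -> b < 2*k+2 -> b != 0 -> b != k+1 -> ~~ CA k (k+1) b ->
  b \in cmpl k.
Proof.
move=> k2 bm b0 bk; case: (parity k k2) => [[H H1 kE]|[H H1 kE]]; subst k.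
- rewrite CkE_even //; last lia.
  rewrite /cmpl half2 odd2 /cform mem_cat !mem_iota; lia.
- rewrite CkE_odd //; last lia.
  rewrite /cmpl half2S odd2S /cform /ext mem_cat !mem_iota; lia.
Qed.

Lemma size_cmpl k : size (cmpl k) = k.
Proof.
rewrite /cmpl size_cat !size_iota.
case: (odd k) (odd_double_half k) => /=; rewrite -mul2n; lia.
Qed.


Lemma card_inj_le (T : finType) (U : eqType) (f : T -> U) (A : {set T}) (s : seq U) :
  injective f -> (forall x, x \in A -> f x \in s) -> #|A| <= size s.
Proof.
move=> fi As; rewrite cardE -(size_map f); apply: uniq_leq_size.
  by rewrite map_inj_uniq // enum_uniq.
by move=> u /mapP [x]; rewrite mem_enum => xA ->; apply: As.
Qed.

Lemma card_inj_eq (T : finType) (U : eqType) (f : T -> U) (s : seq U) :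
  injective f -> uniq s -> (forall u, u \in s -> exists x, f x = u) ->
  #|[set x | f x \in s]| = size s.
Proof.
move=> fi us su; apply/eqP; rewrite eqn_leq (@card_inj_le _ _ f _ s fi); last by move=> x; rewrite inE.
rewrite cardE -(size_map f); apply: uniq_leq_size => // u us'.
have [x fx] := su u us'; apply/mapP; exists x => //; rewrite mem_enum inE fx //.
Qed.

Lemma bigmin_le_seq (I : eqType) (s : seq I) (P : pred I) (F : I -> nat) x0 i :
  i \in s -> P i -> \big[minn/x0]_(j <- s | P j) F j <= F i.
Proof.
elim: s => // a s IH; rewrite inE big_cons => /orP [/eqP <- -> | ins Pi].
  exact: geq_minl.
case: ifP => _; last exact: IH.
by apply: leq_trans (geq_minr _ _) (IH ins Pi).
Qed.

Lemma bigmin_le (I : finType) (P : pred I) (F : I -> nat) x0 i :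
  P i -> \big[minn/x0]_(j | P j) F j <= F i.
Proof. by move=> Pi; apply: bigmin_le_seq => //; rewrite mem_index_enum. Qed.

Lemma bigmin_ge (I : finType) (P : pred I) (F : I -> nat) x0 N :
  N <= x0 -> (forall i, P i -> N <= F i) -> N <= \big[minn/x0]_(j | P j) F j.
Proof.
move=> h1 h2; apply: (big_ind (fun x => N <= x)) => //.
by move=> x y hx hy; rewrite leq_min hx hy.
Qed.

Definition code {n k} (x : Bvert n k) : nat * nat :=
  match x with inl a => (0, nat_of_ord a) | inr (i, v) => ((nat_of_ord i).+1, nat_of_ord v) end.

Lemma code_inj n k : injective (@code n k).
Proof.
move=> [a|[i v]] [b|[j w]] //= [].
- by move=> /val_inj ->.
- by move=> /val_inj -> /val_inj ->.
Qed.

Lemma in_nbhd (T : finType) (adj : rel T) D x :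
  (x \in closed_nbhd adj D) = (x \in D) || [exists d in D, adj d x].
Proof. by rewrite inE. Qed.

Lemma notin_nbhd (T : finType) (adj : rel T) D x :
  x \notin closed_nbhd adj D -> x \notin D /\ (forall d, d \in D -> ~~ adj d x).
Proof.
rewrite in_nbhd negb_or => /andP [h1 /existsPn h2]; split => // d dD.
by have := h2 d; rewrite dD.
Qed.

Definition blk {n k} (x : Bvert n k) : 'I_(Bq n k).+1 :=
  inord (match x with inl a => minn a (Bq n k) | inr (i, _) => nat_of_ord i end).

Lemma blk_inl n k c : nat_of_ord (blk (@inl _ ('I_(Bq n k) * 'I_(2 * k + 2)) c)) = minn c (Bq n k).
Proof. by rewrite /blk inordK // ltnS geq_minr. Qed.

Lemma blk_inr n k i v : nat_of_ord (blk (@inr 'I_(Bq n k + Br n k) _ (i, v))) = i.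
Proof. by rewrite /blk inordK // ltnS ltnW. Qed.

Lemma block_lb n k (D : {set Bvert n k}) (j : 'I_(Bq n k)) :
  2 <= k -> isolating (@Badj n k) k D ->
  2 <= #|[set x in D | nat_of_ord (blk x) == nat_of_ord j]|.
Proof.
move=> k2 iso; have jq := ltn_ord j; rewrite leqNgt ltnS; apply/negP => h.
move: iso; rewrite /isolating => /negP; apply.
set B := [set x in D | _] in h.
have Bx : forall d, d \in B -> [pick x in B] = Some d.
  move=> d dB; case: pickP => [x xB|/(_ d)]; last by rewrite dB.
  by move/card_le1_eqP: h => h; rewrite (h x d xB dB).
pose a := if [pick x in B] is Some x0 then
            (match x0 with inl _ => 0 | inr (_, b) => nat_of_ord b end) else 0.
have am : a < 2 * k + 2.
  by rewrite /a; case: pickP => [[c|[i b]] _|_] //=; try exact: ltn_ord; lia.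
have key : forall w : 'I_(2 * k + 2), inr (j, w) \in closed_nbhd (@Badj n k) D ->
    (nat_of_ord w == a) || CA k a w.
  move=> w; rewrite in_nbhd => /orP [wD | /existsP [d /andP [dD ad]]].
  - have wB : inr (j, w) \in B by rewrite inE wD blk_inr eqxx.
    by rewrite /a (Bx _ wB) eqxx.
  - case: d dD ad => [c|[i b]] dD /=.
    + move=> /andP [/eqP cj /eqP w0].
      have cB : inl c \in B by rewrite inE dD blk_inl cj /=; apply/eqP; lia.
      by rewrite /a (Bx _ cB) w0 eqxx.
    + move=> /andP [/eqP ij ad].
      subst i.
      have bB : inr (j, b) \in B by rewrite inE dD blk_inr eqxx.
      by rewrite /a (Bx _ bB) /= /CA ad orbT.
have [ym ya nya] := L_anti k2 am.
pose s := map (pair (nat_of_ord j).+1) (nb k (anti k a)).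
have [nbU nbS] := L_nbU k (anti k a) k2.
have decode : forall x, code x \in s -> exists2 w : 'I_(2 * k + 2),
    x = inr (j, w) & nat_of_ord w \in nb k (anti k a).
  move=> [c|[i b]] /mapP [w wIn] //= [ij bw].
  exists b => //; last by rewrite bw.
  by congr (inr (_, _)); apply: val_inj.
apply/existsP; exists (inr (j, Ordinal ym)).
apply/existsP; exists [set x | code x \in s].
apply/and5P; split.
- apply/negP => /key /=; rewrite (negbTE ya) /= => H; by rewrite H in nya.
- rewrite inE; apply/negP => /decode [w [ew]] win.
  have [_ _ _ _ ] := L_nb _ _ _ k2 am win; by rewrite -ew eqxx.
- rewrite card_inj_eq.
  + by rewrite size_map nbS.
  + exact: code_inj.
  + by rewrite map_inj_uniq // => x y [].
  + move=> u /mapP [w win ->].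
    have [wm _ _ _ _] := L_nb _ _ _ k2 am win.
    by exists (inr (j, Ordinal wm)).
- rewrite disjoint_subset; apply/subsetP => x; rewrite inE => /decode [w -> win].
  rewrite inE; apply/negP => /key.
  have [_ _ wa nwa _] := L_nb _ _ _ k2 am win.
  by rewrite (negbTE wa) (negbTE nwa).
- apply/forallP => x; apply/implyP; rewrite inE => /decode [w -> win] /=.
  have [_ ca _ _ _] := L_nb _ _ _ k2 am win.
  by rewrite eqxx.
Qed.

Lemma tail_lb n k (D : {set Bvert n k}) :
  2 <= k -> k + 2 <= Br n k -> isolating (@Badj n k) k D ->
  1 <= #|[set x in D | nat_of_ord (blk x) == Bq n k]|.
Proof.
move=> k2 kr iso; rewrite lt0n; apply/negP => /eqP h0.
move: iso; rewrite /isolating => /negP; apply.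
set B := [set x in D | _] in h0.
have nB : forall x, x \in D -> nat_of_ord (blk x) != Bq n k.
  move=> x xD; apply/negP => bx.
  have : x \in B by rewrite inE xD bx.
  by rewrite (cards0_eq h0) inE.
have notN : forall c : 'I_(Bq n k + Br n k), Bq n k + 1 <= c ->
    inl c \notin closed_nbhd (@Badj n k) D.
  move=> c cq; rewrite in_nbhd negb_or; apply/andP; split.
  - apply/negP => cD; have := nB _ cD; rewrite blk_inl; lia.
  - apply/existsPn => d; apply/negP => /andP [dD].
    have := nB _ dD; case: d dD => [e|[i v]] dD /=.
    + rewrite blk_inl /u_edge => h; lia.
    + rewrite blk_inr => _ /andP [/eqP ci _]; have := ltn_ord i; lia.
have cm : Bq n k + Br n k - 1 < Bq n k + Br n k by lia.
pose s := map (pair 0) (iota (Bq n k + 1) k).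
have decode : forall x, code x \in s -> exists2 c : 'I_(Bq n k + Br n k),
    x = inl c & Bq n k + 1 <= c < Bq n k + 1 + k.
  move=> [c|[i b]] /mapP [w wIn] //= [cw].
  by exists c => //; rewrite cw -mem_iota.
apply/existsP; exists (inl (Ordinal cm)).
apply/existsP; exists [set x | code x \in s].
apply/and5P; split.
- by apply: notN => /=; lia.
- rewrite inE; apply/negP => /decode [c [<-]] /=; lia.
- rewrite card_inj_eq.
  + by rewrite size_map size_iota.
  + exact: code_inj.
  + by rewrite map_inj_uniq ?iota_uniq // => x y [].
  + move=> u /mapP [w win ->]; move: win; rewrite mem_iota => win.
    have wm : w < Bq n k + Br n k by lia.
    by exists (inl (Ordinal wm)).
- rewrite disjoint_subset; apply/subsetP => x; rewrite inE => /decode [c -> cb].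
  by rewrite inE; apply: notN; lia.
- apply/forallP => x; apply/implyP; rewrite inE => /decode [c -> cb] /=.
  rewrite /u_edge; lia.
Qed.

Lemma lower n k (D : {set Bvert n k}) :
  2 <= k -> isolating (@Badj n k) k D -> 2 * Bq n k + (k + 2 <= Br n k) <= #|D|.
Proof.
move=> k2 iso.
rewrite -sum1_card (partition_big (@blk n k) predT) //= big_ord_recr /=.
apply: leq_add.
- have -> : 2 * Bq n k = \sum_(j < Bq n k) 2 by rewrite sum_nat_const card_ord mulnC.
  apply: leq_sum => j _; rewrite sum1dep_card.
  have := block_lb _ _ _ j k2 iso.
  congr (_ <= _); apply: eq_card => x; rewrite !inE.
- case: (leqP (k + 2) (Br n k)) => kr //=; rewrite sum1dep_card.
  have := tail_lb _ _ _ k2 kr iso.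
  congr (_ <= _); apply: eq_card => x; rewrite !inE.
Qed.

Definition Dup n k : {set Bvert n k} :=
  [set x | match x with
           | inl a => (nat_of_ord a < Bq n k) || ((k + 2 <= Br n k) && (nat_of_ord a == Bq n k + Br n k - 1))
           | inr (_, b) => nat_of_ord b == k + 1 end].

Lemma upper_iso n k : 2 <= k -> 2 * k + 3 <= n -> isolating (@Badj n k) k (Dup n k).
Proof.
move=> k2 kn.
have q1 : 0 < Bq n k by rewrite /Bq divn_gt0 //; lia.
have F1 : forall c : 'I_(Bq n k + Br n k), inl c \notin closed_nbhd (@Badj n k) (Dup n k) ->
    (Bq n k + 1 <= c) && (Br n k <= k + 1).
  move=> c /notin_nbhd [cD nadj].
  have cqr := ltn_ord c.
  move: cD; rewrite inE => cD.
  have cq : c != Bq n k :> nat.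
    apply/negP => /eqP cq.
    have h : Bq n k - 1 < Bq n k + Br n k by lia.
    have := nadj (inl (Ordinal h)); rewrite inE /= /u_edge /=.
    lia.
  have rk : Br n k <= k + 1.
    rewrite leqNgt; apply/negP => kr.
    have h : Bq n k + Br n k - 1 < Bq n k + Br n k by lia.
    have := nadj (inl (Ordinal h)); rewrite inE /= /u_edge /=; lia.
  lia.
have F2 : forall (i : 'I_(Bq n k)) (b : 'I_(2 * k + 2)),
    inr (i, b) \notin closed_nbhd (@Badj n k) (Dup n k) -> (nat_of_ord b != 0) && (nat_of_ord b \in cmpl k).
  move=> i b /notin_nbhd [bD nadj].
  move: bD; rewrite inE /= => bD.
  have ih : nat_of_ord i < Bq n k + Br n k by have := ltn_ord i; lia.
  have := nadj (inl (Ordinal ih)); rewrite inE /= eqxx /= => b0.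
  have hk : k + 1 < 2 * k + 2 by lia.
  have := nadj (inr (i, Ordinal hk)); rewrite inE /= eqxx /= => nca.
  have b0' : nat_of_ord b != 0 by apply: b0; rewrite ltn_ord.
  have nca' : ~~ CA k (k+1) b by move: (nca isT); rewrite eqxx.
  rewrite b0' /=; apply: (L_cmpl k b k2 (ltn_ord b)) => //.
rewrite /isolating; apply/negP => /existsP [v /existsP [S /and5P [vN vS /eqP Sk Sdis /forallP Sadj]]].
have SN : forall w, w \in S -> w \notin closed_nbhd (@Badj n k) (Dup n k).
  by move=> w wS; rewrite (disjointFr Sdis wS).
have cA : #|v |: S| = k.+1 by rewrite cardsU1 vS Sk.
case: v vN vS Sadj cA => [c|[i b]] vN vS Sadj cA.
- have /andP [cq rk] := F1 c vN.
  have : #|inl c |: S| <= size (map (pair 0) (iota (Bq n k + 1) (Br n k - 1))).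
    apply: card_inj_le; first exact: code_inj.
    move=> x; rewrite in_setU1 => /orP [/eqP -> | xS].
      rewrite /= map_f // mem_iota; have := ltn_ord c; lia.
    have := Sadj x; rewrite xS /=.
    case: x xS => [e|[j bb]] xS /=.
    + move=> _; have /andP [eq _] := F1 e (SN _ xS).
      rewrite map_f // mem_iota; have := ltn_ord e; lia.
    + move=> /andP [/eqP cj _]; have := ltn_ord j; lia.
  rewrite cA size_map size_iota; lia.
- have /andP [b0 bc] := F2 i b vN.
  have : #|inr (i, b) |: S| <= size (map (pair (nat_of_ord i).+1) (cmpl k)).
    apply: card_inj_le; first exact: code_inj.
    move=> x; rewrite in_setU1 => /orP [/eqP -> | xS].
      by rewrite /= map_f.
    have := Sadj x; rewrite xS /=.
    case: x xS => [e|[j bb]] xS /=.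
    + by move=> /andP [_ /eqP bb0]; rewrite bb0 in b0.
    + move=> /andP [/eqP ij _]; subst j.
      have /andP [_ bbc] := F2 i bb (SN _ xS).
      by rewrite map_f.
  rewrite cA size_map size_cmpl; lia.
Qed.

Lemma card_Dup n k : 2 <= k -> #|Dup n k| = 2 * Bq n k + (k + 2 <= Br n k).
Proof.
move=> k2.
pose s := map (pair 0) (iota 0 (Bq n k)) ++ map (fun i => (i.+1, k + 1)) (iota 0 (Bq n k))
          ++ (if k + 2 <= Br n k then [:: (0, Bq n k + Br n k - 1)] else [::]).
have -> : Dup n k = [set x | code x \in s].
  apply/setP => x; rewrite !inE.
  case: x => [a|[i b]] /=; rewrite !mem_cat.
  - have -> : ((0, nat_of_ord a) \in map (fun i => (i.+1, k + 1)) (iota 0 (Bq n k))) = false.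
      by apply/negP => /mapP [j _ []].
    rewrite (mem_map (fun x y (e : (0, x) = (0, y)) => f_equal snd e)) mem_iota /=.
    case: (k + 2 <= Br n k); rewrite ?inE /= ?orbF //.
  - have -> : (((nat_of_ord i).+1, nat_of_ord b) \in map (pair 0) (iota 0 (Bq n k))) = false.
      by apply/negP => /mapP [j _ []].
    have -> : (((nat_of_ord i).+1, nat_of_ord b) \in (if k + 2 <= Br n k then [:: (0, Bq n k + Br n k - 1)] else [::])) = false.
      by case: (k + 2 <= Br n k); rewrite ?inE.
    rewrite orbF /=; apply/idP/idP.
    + move=> /eqP ->; apply/mapP; exists (nat_of_ord i) => //; rewrite mem_iota /=; exact: ltn_ord.
    + by move=> /mapP [j _ [_ ->]].
rewrite card_inj_eq.
- rewrite !size_cat !size_map !size_iota; case: (k + 2 <= Br n k) => /=; lia.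
- exact: code_inj.
- rewrite !cat_uniq !map_inj_uniq ?iota_uniq //=; last by move=> x y [].
  + apply/and3P; split.
    * rewrite has_cat negb_or; apply/andP; split.
      - by apply/hasPn => u /mapP [j _ ->] /=; apply/negP => /mapP [j' _ []].
      - case: ifP => //= kr; rewrite orbF; apply/negP => /mapP [j]; rewrite mem_iota => jq [e]; lia.
    * by case: ifP => //= kr; rewrite orbF; apply/negP => /mapP [j _ []].
    * by case: ifP.
  + by move=> x y [].
- move=> u; rewrite !mem_cat => /or3P [/mapP [a ain ->] | /mapP [i iin ->] | ].
  + have am : a < Bq n k + Br n k by move: ain; rewrite mem_iota; lia.
    by exists (inl (Ordinal am)).
  + have im : i < Bq n k by move: iin; rewrite mem_iota; lia.
    have hk : k + 1 < 2 * k + 2 by lia.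
    by exists (inr (Ordinal im, Ordinal hk)).
  + case: ifP => // kr; rewrite inE => /eqP ->.
    have am : Bq n k + Br n k - 1 < Bq n k + Br n k by lia.
    by exists (inl (Ordinal am)).
Qed.

Theorem lemma3 (k n : nat) :
  2 <= k -> 2 * k + 3 <= n ->
  iota_star (@Badj n k) k = (2 * n) %/ (2 * k + 3).
Proof.
move=> k2 kn.
have q1 : 0 < Bq n k by rewrite /Bq divn_gt0 //; lia.
have rM : Br n k < 2 * k + 3 by rewrite /Br ltn_pmod //; lia.
have -> : (2 * n) %/ (2 * k + 3) = 2 * Bq n k + (k + 2 <= Br n k).
  rewrite {1}(divn_eq n (2 * k + 3)) -/(Bq n k) -/(Br n k).
  rewrite mulnDr mulnA divnMDl; last lia.
  congr (_ + _); case: leqP => kr.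
  - have -> : 2 * Br n k = 1 * (2 * k + 3) + (2 * Br n k - (2 * k + 3)) by lia.
    rewrite divnMDl ?divn_small //; lia.
  - by rewrite divn_small //; lia.
apply/eqP; rewrite eqn_leq; apply/andP; split.
- rewrite -card_Dup //; apply: bigmin_le; exact: upper_iso.
- apply: bigmin_ge.
  + rewrite card_sum card_prod !card_ord.
    have : 2 * Bq n k <= (2 * k + 2) * Bq n k by rewrite leq_mul2r; apply/orP; right; lia.
    lia.
  + by move=> D iso; apply: lower.
Qed.
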